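(* Let $n\ge1$, $m\ge2$, $\alpha\in(0,1)$, $\bar g_a>0$, and let $W$ be a real $mn\times mn$ matrix satisfying (S), (A1), (A2), (A3) from the context, with largest eigenvalue $\mu_{\max}(W)$. If $\bar g_a>\alpha(\mu_{\max}(W)-2)$, then $(\bar s,\bar a)=(0,0)$ is the unique equilibrium of the system $$\dot{\bar s}=W\bar f(\bar s)-\bar s-\bar a,\qquad \dot{\bar a}=\bar g_a\bar f(\bar s)-\alpha\bar a,\qquad (\bar s,\bar a)\in\mathbb{R}^{mn}\times\mathbb{R}^{mn}.$$
   Context: For $s\in\mathbb{R}^{mn}$ write $s=(s_{11},\dots,s_{1m},\dots,s_{n1},\dots,s_{nm})^T$. Define $f_{ij}(s)=e^{s_{ij}}/\sum_{l=1}^m e^{s_{il}}$ and $\bar f(s)=f(s)-\frac1m\mathbf 1_{mn}$, where $\mathbf 1_k$ is the all-ones vector in $\mathbb{R}^k$. The matrix $W$ is viewed as an $n\times n$ array of $m\times m$ blocks $W_{i,k}$, and: (S) $W_{i,i}=0$; (A1) $W$ is symmetric; (A2) $W_{i,k}\mathbf 1_m=\lambda_{ik}\mathbf 1_m$ for scalars $\lambda_{ik}$; (A3) $\lambda_{ik}=\lambda_{ki}$. *)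

(* Defs.v *)
From mathcomp Require Import all_boot all_order all_algebra.
From mathcomp Require Import reals.
From mathcomp Require Import sequences exp.
Set Implicit Arguments. Unset Strict Implicit. Unset Printing Implicit Defensive.
Import Order.TTheory GRing.Theory Num.Theory.
Local Open Scope ring_scope.

(* Vectors of R^{mn} are column vectors 'cV_(n*m); the entry s_{ij}
   (i : 'I_n the block, j : 'I_m inside the block) sits at index
   bidx i j = mxvec_index i j, i.e. position i*m + j, matching the ordering
   s = (s_11,...,s_1m,...,s_n1,...,s_nm). *)
Definition bidx (n m : nat) (i : 'I_n) (j : 'I_m) : 'I_(n * m) := mxvec_index i j.

Definition softmax (R : realType) (n m : nat) (s : 'cV[R]_(n * m)) : 'cV[R]_(n * m) :=
  \col_k (let M := \matrix_(i < n, j < m) s (bidx i j) 0 in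
          (mxvec (\matrix_(i < n, j < m)
                    (expR (M i j) / \sum_(l < m) expR (M i l)))) 0 k).

Definition fbar (R : realType) (n m : nat) (s : 'cV[R]_(n * m)) : 'cV[R]_(n * m) :=
  softmax s - const_mx (m%:R^-1).

Definition is_equilibrium (R : realType) (n m : nat) (W : 'M[R]_(n * m))
    (ga alpha : R) (s a : 'cV[R]_(n * m)) : Prop :=
  W *m fbar s - s - a = 0 /\ ga *: fbar s - alpha *: a = 0.

Definition is_largest_eigenvalue (R : realType) (k : nat) (W : 'M[R]_k) (mu : R) : Prop :=
  eigenvalue W mu /\ forall a : R, eigenvalue W a -> a <= mu.

(* Main.v *)
Require Import Defs.
From mathcomp Require Import all_boot all_order all_algebra.
From mathcomp Require Import reals.
From mathcomp Require Import sequences exp.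
From mathcomp Require Import boolp classical_sets topology normedtype derive realfun.
From mathcomp Require Import ring lra.
From mathcomp Require Import complex spectral sesquilinear.
Import Order.TTheory GRing.Theory Num.Theory.
Local Open Scope ring_scope.

Section LnIneq.
Import numFieldNormedType.Exports.
Lemma ln_ge_aux (R : realType) (x : R) : 1 <= x -> 2 * (x - 1) / (x + 1) <= ln x.
Proof.
move=> x1.
pose f (t : R) := ln t + 4 * (t + 1)^-1.
have dF : forall t : R, 0 < t -> is_derive t 1 f (t^-1 - 4 * (t + 1) ^- 2).
  move=> t t0.
  have t1 : t + 1 != 0 by rewrite gt_eqF // addr_gt0.
  have h1 : is_derive t 1 (fun y : R => y + 1) 1.
    apply: DeriveDef; first by apply: derivableD.
    by rewrite deriveD // derive_id derive_cst addr0.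
  have hd : is_derive t 1 (fun y : R => (y + 1)^-1) (- (t + 1) ^- 2).
    apply: DeriveDef.
      by apply: derivableV.
    rewrite deriveV //.
    by rewrite derive_val /GRing.scale /= mulr1.
  have := @is_deriveD _ _ _ (@ln R) (fun y => 4 * (y + 1)^-1) t 1 _ _ (is_derive1_ln t0)
     (is_deriveZ 4 hd).
  rewrite /f /=.
  congr is_derive.
  by rewrite /GRing.scale /= mulrN.
have key : f 1 <= f x.
  apply: (@ger0_derive1_ndecr _ f 1 x) => //.
  - move=> t; rewrite in_itv /= => /andP[t1 _].
    have := dF t (lt_trans ltr01 t1). move=> H. exact: ex_derive.
  - move=> t; rewrite in_itv /= => /andP[t1 _].
    have t0 : 0 < t by exact: lt_trans ltr01 t1.
    have H := dF t t0; rewrite derive1E derive_val.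
    have e : t^-1 - 4 / (t + 1) ^+ 2 = (t - 1)^+2 / (t * (t + 1)^+2).
      by field; rewrite !gt_eqF // addr_gt0.
    rewrite e divr_ge0 // ?sqr_ge0 // mulr_ge0 // ?sqr_ge0 // ltW //.
  - apply: derivable_within_continuous => t; rewrite in_itv /= => /andP[t1 _].
    have := dF t (lt_le_trans ltr01 t1). move=> H. exact: ex_derive.
have x0 : 0 < x by exact: lt_le_trans ltr01 x1.
move: key; rewrite /f ln1 add0r.
have -> : 2 * (x - 1) / (x + 1) = 2 - 4 * (x + 1)^-1.
  by field; rewrite gt_eqF // addr_gt0.
have -> : (1 + 1 : R) = 2 by [].
lra.
Qed.
End LnIneq.

Lemma ln_mean_aux (R : realType) (a b : R) : 0 < a -> 0 < b -> b <= a ->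
  2 * (a - b)^+2 / (a + b) <= (a - b) * (ln a - ln b).
Proof.
move=> a0 b0 ba.
have x1 : 1 <= a / b by rewrite ler_pdivlMr // mul1r.
have := @ln_ge_aux R _ x1.
rewrite ln_div ?posrE //.
have -> : 2 * (a / b - 1) / (a / b + 1) = 2 * (a - b) / (a + b).
  by field; rewrite !gt_eqF ?addr_gt0 //.
move=> H.
have -> : 2 * (a - b) ^+ 2 / (a + b) = (a - b) * (2 * (a - b) / (a + b)).
  by field; rewrite !gt_eqF ?addr_gt0 //.
by apply: ler_wpM2l => //; rewrite subr_ge0.
Qed.

Lemma ln_mean (R : realType) (a b : R) : 0 < a -> 0 < b ->
  2 * (a - b)^+2 / (a + b) <= (a - b) * (ln a - ln b).
Proof.
move=> a0 b0; have [ba|ab] := leP b a; first exact: (@ln_mean_aux R).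
have := @ln_mean_aux R _ _ b0 a0 (ltW ab).
have -> : (b - a) ^+ 2 = (a - b)^+2 by ring.
have -> : (b - a) * (ln b - ln a) = (a - b) * (ln a - ln b) by ring.
by rewrite [b + a]addrC.
Qed.

Lemma chi2_aux (R : realType) k (d q : 'I_k -> R) :
  (forall j, 0 < q j) -> \sum_j q j = 2 -> \sum_j d j = 0 ->
  \sum_j d j ^+ 2 <= \sum_j d j ^+ 2 / q j.
Proof.
move=> q0 sq sd.
set A := \sum_j `|d j|.
have hb : forall j, `|d j| <= A / 2.
  move=> j.
  have e1 : A = `|d j| + \sum_(l | l != j) `|d l| by rewrite /A (bigD1 j).
  have e2 : \sum_(l | l != j) d l = - d j.
    by move: sd; rewrite (bigD1 j) //= => sd; lra.
  have h3 : `|\sum_(l | l != j) d l| <= \sum_(l | l != j) `|d l| by apply: ler_norm_sum.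
  rewrite e2 normrN in h3.
  lra.
have s1 : \sum_j d j ^+ 2 <= A * (A / 2).
  apply: (@le_trans _ _ (\sum_j `|d j| * (A/2))).
    apply: ler_sum => j _; rewrite -(real_normK (num_real (d j))) expr2; apply: ler_wpM2l => //; exact: hb.
  by rewrite /A -mulr_suml.
have s2 : \sum_j (A * `|d j| - A ^+ 2 / 4 * q j) <= \sum_j d j ^+ 2 / q j.
  apply: ler_sum => j _.
  have qj := q0 j.
  rewrite -(real_normK (num_real (d j))).
  have -> : `|d j| ^+ 2 / q j = (`|d j| - A * q j / 2) ^+ 2 / q j + (A * `|d j| - A ^+ 2 / 4 * q j).
    by field; rewrite gt_eqF.
  rewrite lerDr divr_ge0 // ?sqr_ge0 // ltW //.
rewrite sumrB -mulr_sumr -mulr_sumr sq -/A in s2.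
lra.
Qed.

Lemma block_core (R : realType) k (p x : 'I_k -> R) (u K : R) :
  (forall j, 0 < p j) -> 0 < u -> \sum_j p j = 1 -> \sum_(j < k) u = 1 ->
  (forall j, ln (p j) = x j - K) ->
  2 * \sum_j (p j - u) ^+ 2 <= \sum_j (p j - u) * x j.
Proof.
move=> p0 u0 sp su lnp.
have sd : \sum_j (p j - u) = 0 by rewrite sumrB sp su subrr.
have step1 : \sum_j (p j - u) * x j = \sum_j (p j - u) * (ln (p j) - ln u).
  apply/eqP; rewrite -subr_eq0 -sumrB; apply/eqP.
  have e : forall j, (p j - u) * x j - (p j - u) * (ln (p j) - ln u) = (p j - u) * (K + ln u).
    by move=> j; rewrite lnp; ring.
  under eq_bigr => j _ do rewrite e.
  by rewrite -mulr_suml sd mul0r.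
rewrite step1.
apply: (@le_trans _ _ (2 * \sum_j (p j - u) ^+ 2 / (p j + u))).
  rewrite ler_pM2l; last by [].
  apply: (@chi2_aux R _ (fun j => p j - u) (fun j => p j + u)).
  - by move=> j; rewrite addr_gt0.
  - by rewrite big_split /= sp su.
  - exact: sd.
rewrite mulr_sumr; apply: ler_sum => j _; rewrite mulrA.
exact: (@ln_mean R (p j) u (p0 j) u0).
Qed.

Lemma block_ineq (R : realType) m (x : 'I_m -> R) : (0 < m)%N ->
  2 * \sum_j (expR (x j) / (\sum_l expR (x l)) - m%:R^-1)^+2 <=
  \sum_j (expR (x j) / (\sum_l expR (x l)) - m%:R^-1) * x j.
Proof.
case: m x => [//|m'] x _.
have Z0 : 0 < \sum_l expR (x l).
  rewrite (bigD1 ord0) //=.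
  apply: (@lt_le_trans _ _ (expR (x ord0) + 0)); first by rewrite addr0 expR_gt0.
  by rewrite lerD2l sumr_ge0 // => i _; rewrite ltW // expR_gt0.
apply: (@block_core R _ (fun j => expR (x j) / (\sum_l expR (x l))) x _ (ln (\sum_l expR (x l)))).
- by move=> j; rewrite divr_gt0 // expR_gt0.
- by rewrite invr_gt0 ltr0n.
- by rewrite -mulr_suml divff // gt_eqF.
- by rewrite sumr_const card_ord -[_ *+ _]mulr_natl mulfV // pnatr_eq0.
- by move=> j; rewrite ln_div ?posrE ?expR_gt0 // expRK.
Qed.

Section Quad.
Local Open Scope sesquilinear_scope.
Variable R : realType.
Local Notation C := (complex R).
Local Notation toC := (real_complex R).

Lemma toC_real (r : R) : toC r \is Num.real.
Proof. by rewrite complex_real. Qed.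

Lemma conj_toC (r : R) : (toC r)^* = toC r.
Proof. exact: conj_Creal (toC_real r). Qed.

Lemma eig_transfer k (W : 'M[R]_k) (r : R) :
  eigenvalue (map_mx toC W) (toC r) -> eigenvalue W r.
Proof. by rewrite !eigenvalue_root_char -map_char_poly fmorph_root. Qed.

Lemma quad_le k (W : 'M[R]_k) mu : W^T = W -> (forall a, eigenvalue W a -> a <= mu) ->
  forall x : 'rV[R]_k, (x *m W *m x^T) 0 0 <= mu * (x *m x^T) 0 0.
Proof.
move=> Wsym Wmu x.
set A := map_mx toC W.
have Ah : A \is hermsymmx.
  apply: realsym_hermsym.
    apply/is_hermitianmxP. 
    by rewrite expr0 scale1r map_mx_id // /A map_trmx Wsym.
  by apply/mxOverP => i j; rewrite mxE toC_real.
set P := spectralmx A.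
set dg := spectral_diag A.
have Pu : P \is unitarymx by exact: spectral_unitarymx.
have Punit : P \in unitmx by exact: spectral_unit.
have AE : A = invmx P *m diag_mx dg *m P.
  by apply/orthomx_spectralP; exact: hermitian_normalmx.
have iP : invmx P = P ^t* by exact: invmx_unitary.
have PA : P *m A = diag_mx dg *m P by rewrite AE -mulmxA mulKVmx.
have dreal : dg \is a realmx by exact: hermitian_spectral_diag_real.
have dle : forall j, dg 0 j <= toC mu.
  move=> j.
  have dj : dg 0 j \is Num.real by exact: (mxOverP dreal).
  rewrite -(RRe_real dj) lecR.
  apply: Wmu; apply: eig_transfer; rewrite (RRe_real dj).
  apply/eigenvalueP; exists (row j P).
    by rewrite -row_mul PA row_mul row_diag_mx -scalemxAl -rowE.
  apply/eqP => H0.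
  have : delta_mx 0 j = 0 :> 'rV[C]_k.
    by rewrite -(mulmxK Punit (delta_mx 0 j)) -rowE H0 mul0mx.
  by move/rowP/(_ j); rewrite !mxE !eqxx /= => /eqP; rewrite oner_eq0.
set xC := map_mx toC x.
set y := xC *m P^t*.
have yt : y^t* = P *m xC^t*.
  by rewrite /y trmx_mul map_mxM trmxCK.
have e1 : xC *m A *m xC^t* = y *m diag_mx dg *m y^t*.
  by rewrite yt AE iP /y !mulmxA.
have e2 : xC *m xC^t* = y *m y^t*.
  by rewrite yt /y -iP !mulmxA -[xC *m invmx P *m P]mulmxA mulVmx // mulmx1.
have xCt : xC^t* = map_mx toC x^T.
  by apply/matrixP => i j; rewrite !mxE conj_toC.
have gen : forall z : 'rV[C]_k, (z *m diag_mx dg *m z^t*) 0 0 <= toC mu * (z *m z^t*) 0 0.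
  move=> z.
  rewrite mul_mx_diag !mxE mulr_sumr.
  apply: ler_sum => j _; rewrite !mxE.
  rewrite mulrAC [X in _ <= X]mulrC.
  by apply: ler_wpM2l; [exact: mul_conjC_ge0 | exact: dle].
have key : (xC *m A *m xC^t*) 0 0 <= toC mu * (xC *m xC^t*) 0 0.
  by rewrite e1 e2; exact: gen.
move: key; rewrite xCt /A /xC -!map_mxM !mxE -rmorphM lecR.
by [].
Qed.
End Quad.

Section Main.
Variable R : realType.
Variables n m : nat.

Lemma sum_mxvec (F : 'I_(n * m) -> R) :
  \sum_k F k = \sum_(i < n) \sum_(j < m) F (bidx i j).
Proof.
rewrite (reindex (fun p : 'I_n * 'I_m => mxvec_index p.1 p.2)) /=; last first.
  have [g h1 h2] := curry_mxvec_bij n m; exists g => [[i j]|k] _ /=.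
    exact: (h1 (i, j)).
  by have := h2 k; case: (g k) => i j /= ->.
by rewrite pair_big.
Qed.

Lemma fbarE (s : 'cV[R]_(n * m)) i j :
  fbar s (bidx i j) 0 = expR (s (bidx i j) 0) / \sum_(l < m) expR (s (bidx i l) 0) - m%:R^-1.
Proof.
rewrite /fbar /softmax !mxE /bidx mxvecE !mxE.
by under eq_bigr => l _ do rewrite mxE.
Qed.

Lemma dotE k (u v : 'cV[R]_k) : (u^T *m v) 0 0 = \sum_i u i 0 * v i 0.
Proof. by rewrite mxE; apply: eq_bigr => i _; rewrite mxE. Qed.

End Main.

Theorem proposition1 (R : realType) (n m : nat) (W : 'M[R]_(n * m))
    (lam : 'I_n -> 'I_n -> R) (alpha ga mu : R) :
  (0 < n)%N -> (1 < m)%N ->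
  0 < alpha < 1 -> 0 < ga ->
  (* (S) diagonal blocks vanish *)
  (forall (i : 'I_n) (j l : 'I_m), W (bidx i j) (bidx i l) = 0) ->
  (* (A1) symmetry *)
  W^T = W ->
  (* (A2) W_{i,k} 1_m = lam i k 1_m *)
  (forall (i k : 'I_n) (j : 'I_m), \sum_(l < m) W (bidx i j) (bidx k l) = lam i k) ->
  (* (A3) *)
  (forall i k : 'I_n, lam i k = lam k i) ->
  is_largest_eigenvalue W mu ->
  ga > alpha * (mu - 2) ->
  forall s a : 'cV[R]_(n * m),
    is_equilibrium W ga alpha s a <-> (s = 0 /\ a = 0).
Proof.
move=> n0 m1 /andP[al0 _] ga0 _ Wsym _ _ [_ Hmu] Hga s a.
have m0 : (0 < m)%N by apply: ltn_trans m1.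
have fbar0 : fbar (0 : 'cV[R]_(n * m)) = 0.
  apply/matrixP => k i; rewrite ord1.
  case/mxvec_indexP: k => i' j.
  rewrite -/(bidx i' j) fbarE [RHS]mxE.
  under eq_bigr => l _ do rewrite mxE expR0.
  rewrite mxE expR0 sumr_const card_ord -[1 *+ m]mulr_natl mulr1 div1r.
  by rewrite subrr.
split; last first.
  case=> -> ->; rewrite /is_equilibrium fbar0 mulmx0 !scaler0 !subr0.
  by [].
case=> H1 H2.
set g := fbar s.
set c := ga / alpha.
have aE : a = c *: g.
  apply: (@scalerI _ _ alpha); first by rewrite gt_eqF.
  move/eqP: H2; rewrite subr_eq0 => /eqP <-.
  by rewrite scalerA /c mulrCA mulfV ?gt_eqF // mulr1.
have sE : s = W *m g - c *: g.
  rewrite -aE; move/eqP: H1; rewrite -addrA -opprD subr_eq0 => /eqP ->.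
  by rewrite addrK.
have Hsoft : 2 * \sum_k g k 0 ^+ 2 <= \sum_k g k 0 * s k 0.
  rewrite !sum_mxvec mulr_sumr; apply: ler_sum => i _.
  under eq_bigr => j _ do rewrite /g fbarE.
  under [X in _ <= X]eq_bigr => j _ do rewrite /g fbarE.
  exact: (@block_ineq R m (fun j => s (bidx i j) 0)).
have Hquad : \sum_k g k 0 * (W *m g) k 0 <= mu * \sum_k g k 0 ^+ 2.
  have := @quad_le R _ W mu Wsym Hmu g^T.
  rewrite trmxK -mulmxA !dotE.
  by under [X in _ <= _ * X]eq_bigr => k _ do rewrite -expr2.
have Q0 : \sum_k g k 0 ^+ 2 = 0.
  move: Hquad Hsoft; rewrite sE; move: (W *m g) => h Hq.
  have e : \sum_k g k 0 * (h - c *: g) k 0 = \sum_k g k 0 * h k 0 - c * \sum_k g k 0 ^+ 2.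
    rewrite mulr_sumr -sumrB; apply: eq_bigr => k _; rewrite !mxE; ring.
  rewrite e => Hs.
  have cmu : mu - 2 < c by rewrite /c ltr_pdivlMr // mulrC.
  have Qge : 0 <= \sum_k g k 0 ^+ 2 by apply: sumr_ge0 => k _; exact: sqr_ge0.
  apply/eqP; rewrite eq_le Qge andbT.
  set Q := \sum_k g k 0 ^+ 2 in Hq Hs Qge *.
  nra.
have g0 : g = 0.
  apply/matrixP => k i; rewrite ord1 [RHS]mxE.
  have h : g k 0 ^+ 2 <= 0.
    rewrite -Q0 (bigD1 k) //= lerDl sumr_ge0 // => l _; exact: sqr_ge0.
  by apply/eqP; rewrite -sqrf_eq0 eq_le h sqr_ge0.
by rewrite sE aE g0 mulmx0 scaler0 subr0.
Qed.
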